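(* Let $p=a/b$ with $a,b$ positive coprime integers and $b\not\equiv 0\pmod 4$. Set $k'=b$ if $b$ is even and $k'=2b$ if $b$ is odd. Let $(\Delta_L^{(m)})_{m\ge 1}$ be any real sequence satisfying $\Delta_L^{(m+1)}=\Delta_L^{(m)}+1+2p-2\lceil\Delta_L^{(m)}\rceil$ for all $m\ge1$ (with arbitrary real initial value $\Delta_L^{(1)}$). Then $\Delta_L^{(m+k')}=\Delta_L^{(m)}$ for all $m\ge 1$; equivalently, $$k'p+\sum_{l=0}^{k'-1}(-1)^l\lceil \Delta_L^{(m)}+2lp\rceil=0\quad\text{for all } m\ge1 .$$
   Context: $\lceil\cdot\rceil$ denotes the ceiling function. The recursion for $\Delta_L$ is the ''leading-order'' approximation of the extremum-to-extremum evolution of the dynamical system $p(i+1)=p(i)-\operatorname{sgn}x(i)$, $x(i+1)=x(i)+p(i)-\operatorname{sgn}x(i)$. *)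

(* Defs.v *)
From Stdlib Require Import Reals ZArith Znumtheory.
Open Scope R_scope.

(* Ceiling function: ceil x is the least integer n with x <= n.
   Stdlib's [up y] is the unique integer n with y < n <= y + 1,
   so ceil x = 1 - up (-x). *)
Definition Rceil (x : R) : Z := (1 - up (- x))%Z.

Definition kprime (b : nat) : nat := if Nat.even b then b else (2 * b)%nat.

(* Main.v *)
Require Import Defs.
From Stdlib Require Import Reals ZArith Znumtheory Lra Lia.
Open Scope R_scope.

Lemma Rceil_shift (x : R) (z : Z) : Rceil (x + IZR z) = (Rceil x + z)%Z.
Proof.
  unfold Rceil.
  assert (H : up (- (x + IZR z)) = (up (- x) - z)%Z).
  { symmetry. apply tech_up; destruct (archimed (- x)) as [H1 H2];
    rewrite minus_IZR; lra. }
  rewrite H. lia.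
Qed.

Lemma kprime_dec (b : nat) : (0 < b)%nat -> (b mod 4 <> 0)%nat ->
  exists h q N : nat, kprime b = (2 * h)%nat /\ h = (2 * q + 1)%nat /\
   forall a : nat, exists N, INR h * (2 * (INR a / INR b)) = INR N.
Proof.
  intros hb hb4. unfold kprime.
  destruct (Nat.even b) eqn:E.
  - apply Nat.even_spec in E. destruct E as [h Hh].
    assert (Nat.odd h = true).
    { destruct (Nat.odd h) eqn:O; auto. exfalso.
      apply Bool.negb_true_iff in O. rewrite Nat.negb_odd in O.
      apply Nat.even_spec in O. destruct O as [r Hr]. subst.
      apply hb4. replace (2 * (2 * r))%nat with (r * 4)%nat by lia.
      apply Nat.Div0.mod_mul. }
    apply Nat.odd_spec in H. destruct H as [q Hq].
    exists h, q, 0%nat. split; [lia|]. split; [lia|].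
    intros a. exists a. subst b. rewrite mult_INR. simpl (INR 2).
    assert (INR h <> 0). { apply not_0_INR. lia. }
    field. auto.
  - assert (Nat.odd b = true) by (rewrite <- Nat.negb_even, E; auto).
    apply Nat.odd_spec in H. destruct H as [q Hq].
    exists b, q, 0%nat. split; [lia|]. split; [lia|].
    intros a. exists (2 * a)%nat. rewrite mult_INR. simpl (INR 2).
    assert (INR b <> 0). { apply not_0_INR. lia. }
    field. auto.
Qed.

Theorem lemma1 (a b : nat) (D : nat -> R)
  (ha : (0 < a)%nat) (hb : (0 < b)%nat)
  (hcop : Nat.gcd a b = 1%nat)
  (hb4 : (b mod 4 <> 0)%nat)
  (hrec : forall m : nat, (1 <= m)%nat ->
     D (S m) = D m + 1 + 2 * (INR a / INR b) - 2 * IZR (Rceil (D m))) :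
  forall m : nat, (1 <= m)%nat -> D (m + kprime b)%nat = D m.
Proof.
  destruct (kprime_dec b hb hb4) as [h [q [_ [Hk [Hh HN]]]]].
  destruct (HN a) as [N HNe].
  set (p := INR a / INR b) in *.
  assert (A : forall j : nat, exists z : Z,
             D (1 + j)%nat = D 1%nat + INR j * (2 * p) + IZR z).
  { induction j as [|j IH].
    - exists 0%Z. simpl. lra.
    - destruct IH as [z Hz].
      exists (z + 1 - 2 * Rceil (D (1 + j)%nat))%Z.
      replace (1 + S j)%nat with (S (1 + j)) by lia.
      rewrite hrec by lia. rewrite Hz at 1. rewrite S_INR.
      rewrite minus_IZR, plus_IZR, mult_IZR. simpl (IZR 1). simpl (IZR 2).
      lra. }
  assert (B : forall m z, (1 <= m)%nat -> D (m + h)%nat = D m + IZR z ->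
             D (S m + h)%nat = D (S m) - IZR z).
  { intros m z Hm Hz.
    replace (S m + h)%nat with (S (m + h)) by lia.
    rewrite (hrec (m + h)%nat) by lia. rewrite (hrec m) by lia.
    rewrite Hz, Rceil_shift, plus_IZR. lra. }
  assert (P : forall m, (1 <= m)%nat -> exists z, D (m + h)%nat = D m + IZR z).
  { intros m Hm. induction m as [|m IH]; [lia|].
    destruct (Nat.eq_dec m 0) as [->|Hm0].
    - destruct (A h) as [z Hz]. exists (Z.of_nat N + z)%Z.
      rewrite Hz, plus_IZR, <- INR_IZR_INZ, <- HNe. lra.
    - destruct IH as [z Hz]; [lia|]. exists (- z)%Z.
      rewrite (B m z) by (auto; lia). rewrite opp_IZR. lra. }
  intros m Hm. destruct (P m Hm) as [z Hz].
  assert (C : forall i, D (m + 2 * i + h)%nat = D (m + 2 * i)%nat + IZR z).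
  { induction i as [|i IH].
    - replace (m + 2 * 0)%nat with m by lia. exact Hz.
    - replace (m + 2 * S i)%nat with (S (S (m + 2 * i))) by lia.
      apply B in IH; [|lia].
      assert (IH' : D (S (m + 2 * i) + h)%nat = D (S (m + 2 * i)) + IZR (- z)) by (rewrite opp_IZR; lra).
      apply B in IH'; [|lia]. rewrite opp_IZR in IH'. lra. }
  specialize (C q). apply B in C; [|lia].
  rewrite Hk. replace (m + 2 * h)%nat with (S (m + 2 * q) + h)%nat by lia.
  rewrite C. replace (S (m + 2 * q)) with (m + h)%nat by lia. rewrite Hz. lra.
Qed.
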